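(* Let $a,b,c,d,e\in\mathbb C$ with $a\notin\mathbb Z$ and $e\notin\{0,-1,-2,\dots\}$. Then, as an identity of formal power series in $x,y$, $$F(a,b;e;x)\,F(c,d;1-a;y)=H_2(a,b,c,d;e;x,-y)+\sum_{k=1}^\infty\sum_{l=1}^k\frac{(k-1)!}{(l-1)!\,l!\,(k-l)!}\,\frac{(-1)^{k-l}(b)_l(c)_k(d)_k}{(1-a)_k(1-a)_{k-l}(e)_l}\,x^ly^k\,H_2(a-k+l,b+l,c+k,d+k;e+l;x,-y).$$
   Context: Pochhammer symbol: $(\lambda)_k=\Gamma(\lambda+k)/\Gamma(\lambda)$ for every integer $k$ (possibly negative) whenever defined; $(\lambda)_0=1$. Gauss function $F(a,b;c;x)=\sum_{k\ge0}\frac{(a)_k(b)_k}{(c)_k k!}x^k$. Horn's function $H_2(a,b,c,d;e;x,y)=\sum_{p,q\ge0}\frac{(a)_{p-q}(b)_p(c)_q(d)_q}{(e)_p\,p!\,q!}x^py^q$. All functions are regarded as formal power series in $x,y$; the infinite double sum converges in the formal (degree) topology. *)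

(* Defs.v *)
From HB Require Import structures.
From mathcomp Require Import all_boot all_order all_algebra.
Set Implicit Arguments. Unset Strict Implicit. Unset Printing Implicit Defensive.
Import Order.TTheory GRing.Theory Num.Theory.
Local Open Scope ring_scope.

Section Defs.
Variable R : numClosedFieldType.

(* Pochhammer symbol (lambda)_k = Gamma(lambda+k)/Gamma(lambda), k : int.
   k = n >= 0 : lambda (lambda+1) ... (lambda+n-1);
   k = -(n+1) : 1 / ((lambda-1)(lambda-2)...(lambda-n-1)). *)
Definition poch (x : R) (k : int) : R :=
  match k with
  | Posz n => \prod_(i < n) (x + i%:R)
  | Negz n => (\prod_(i < n.+1) (x - (i.+1)%:R))^-1
  end.

(* Formal power series in x,y : coefficient of x^p y^q. *)
Definition ps := nat -> nat -> R.

Definition psmul (f g : ps) : ps := fun p q =>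
  \sum_(i < p.+1) \sum_(j < q.+1) f i j * g (p - i)%N (q - j)%N.

Definition psX (l k : nat) : ps := fun p q => ((p == l) && (q == k))%:R.

Definition psscale (c : R) (f : ps) : ps := fun p q => c * f p q.

Definition Fx (a b c : R) : ps := fun p q =>
  if q == 0%N then poch a p * poch b p / (poch c p * (p`!)%:R) else 0.

Definition Fy (a b c : R) : ps := fun p q =>
  if p == 0%N then poch a q * poch b q / (poch c q * (q`!)%:R) else 0.

Definition H2 (a b c d e : R) : ps := fun p q =>
  poch a (p%:Z - q%:Z) * poch b p * poch c q * poch d q
  / (poch e p * (p`!)%:R * (q`!)%:R).

Definition H2neg (a b c d e : R) : ps := fun p q =>
  (-1) ^+ q * H2 a b c d e p q.

Definition Tkl (a b c d e : R) (k l : nat) : ps :=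
  psscale ((((k.-1)`!)%:R / (((l.-1)`!)%:R * (l`!)%:R * ((k - l)`!)%:R))
           * ((-1) ^+ (k - l) * poch b l * poch c k * poch d k
              / (poch (1 - a) k * poch (1 - a) (k - l)%N * poch e l)))
    (psmul (psX l k)
       (H2neg (a - k%:R + l%:R) (b + l%:R) (c + k%:R) (d + k%:R) (e + l%:R))).

(* Formal sum over k >= 1, 1 <= l <= k.  Since Tkl k l is a multiple of y^k,
   only k <= q contributes to the coefficient of x^p y^q, so the formal
   (degree-topology) limit has this coefficient. *)
Definition Tsum (a b c d e : R) : ps := fun p q =>
  \sum_(1 <= k < q.+1) \sum_(1 <= l < k.+1) Tkl a b c d e k l p q.

End Defs.

(* Main.v *)
Require Import Defs.
From HB Require Import structures.
From mathcomp Require Import all_boot all_order all_algebra.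
From mathcomp Require Import ring zify.
Import Order.TTheory GRing.Theory Num.Theory.
Local Open Scope ring_scope.

Arguments poch : simpl never.
Section H.
Variable R : numClosedFieldType.
Implicit Types x u : R.

Lemma poch0 x : poch x 0 = 1.
Proof. exact: big_ord0. Qed.

Lemma poch0' x : poch x (Posz 0%N) = 1.
Proof. exact: big_ord0. Qed.

Lemma pochS x (n : nat) : poch x n.+1 = poch x n * (x + n%:R).
Proof. by rewrite /poch big_ord_recr. Qed.

Lemma pochS' x (n : nat) : poch x n.+1 = x * poch (x + 1) n.
Proof.
rewrite /poch big_ord_recl /= addr0; congr (_ * _).
by apply: eq_bigr => i _; rewrite /bump leq0n add1n -nat1r addrA.
Qed.

Lemma poch_split x (l m : nat) : poch x (l + m)%N = poch x l * poch (x + l%:R) m.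
Proof.
elim: m => [|m IH]; first by rewrite addn0 poch0 mulr1.
by rewrite addnS !pochS IH natrD addrA mulrA.
Qed.

Lemma poch_neg x (q : nat) : poch (- x - q%:R + 1) q = (-1) ^+ q * poch x q.
Proof.
elim: q x => [|q IH] x; first by rewrite ?poch0 ?poch0' expr0 mulr1.
rewrite pochS' pochS.
have -> : - x - q.+1%:R + 1 + 1 = - x - q%:R + 1 by rewrite -natr1; ring.
rewrite IH exprS -natr1; ring.
Qed.

Lemma natz' (n : nat) : (Posz n)%:~R = n%:R :> R.
Proof. by []. Qed.

Definition nonint x := forall j : int, x + j%:~R != 0.

Lemma nonint_shift x (j : int) : nonint x -> nonint (x + j%:~R).
Proof. by move=> h k; rewrite -addrA -intrD. Qed.

Lemma nonint_addn x (n : nat) : nonint x -> nonint (x + n%:R).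
Proof. by move=> h; rewrite -natz'; exact: nonint_shift. Qed.

Lemma nonint_subn x (n : nat) : nonint x -> nonint (x - n%:R).
Proof. by move=> h; rewrite -natz' -intrN; exact: nonint_shift. Qed.

Lemma poch_neq0 x (n : nat) : nonint x -> poch x n != 0.
Proof.
move=> h; apply/prodf_neq0 => i _.
by have := h (Posz i); rewrite -[i%:R]natz'.
Qed.

Lemma nonint_neq0 x : nonint x -> x != 0.
Proof. by move=> h; have := h 0; rewrite addr0. Qed.

Lemma poch_succ x (k : int) : nonint x -> poch x (k + 1) = poch x k * (x + k%:~R).
Proof.
move=> h; case: k => n.
  have -> : Posz n + 1 = Posz n.+1 by rewrite -addn1 PoszD.
  by rewrite pochS natz'.
case: n => [|n].
  have -> : Negz 0 + 1 = 0 by [].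
  rewrite poch0 /poch big_ord1 /= NegzE intrN natz'.
  rewrite mulVf //; have := h (-1); by rewrite intrN.
have -> : Negz n.+1 + 1 = Negz n by rewrite !NegzE -addn1 PoszD opprD addrK.
rewrite /poch [in RHS]big_ord_recr /= invfM -mulrA NegzE intrN natz'.
rewrite mulVf ?mulr1 //.
have := h (- (Posz n.+2)); by rewrite intrN natz'.
Qed.

Lemma poch_addn x (r : int) (n : nat) : nonint x ->
  poch x (r + n%:Z) = poch x r * poch (x + r%:~R) n.
Proof.
move=> h; elim: n => [|n IH]; first by rewrite addr0 poch0 mulr1.
have -> : r + n.+1%:Z = (r + n%:Z) + 1 by rewrite -addn1 PoszD addrA.
rewrite poch_succ // IH pochS intrD natz' addrA; ring.
Qed.

Lemma poch_sub x (i j : nat) : nonint x ->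
  poch x (i%:Z - j%:Z) * poch (x + i%:R - j%:R) j = poch x i.
Proof.
move=> h; have := poch_addn x (i%:Z - j%:Z) j h.
by rewrite subrK intrB !natz' addrA => ->.
Qed.


Lemma chu (q : nat) : forall u x, (forall i : nat, u + i%:R != 0) ->
  \sum_(k < q.+1) ('C(q, k))%:R * (-1) ^+ k * poch x k / poch u k
  = poch (u - x) q / poch u q.
Proof.
elim: q => [|q IH] u x hu.
  by rewrite big_ord1 /= ?poch0 ?poch0' bin0 expr0; field.
have hu0 : u != 0 by have := hu 0%N; rewrite addr0.
have hpu : forall n : nat, poch u n != 0.
  by move=> n; apply/prodf_neq0 => i _; exact: hu.
have hu1 : forall i : nat, u + 1 + i%:R != 0.
  by move=> i; rewrite -addrA nat1r; exact: hu.
rewrite big_ord_recl /= bin0 expr0 ?poch0 ?poch0' divr1 mulr1.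
under eq_bigr => i _ do rewrite /bump /= add1n binS natrD !mulrDl.
rewrite big_split /= ?mulr1.
have E1 : 1 + \sum_(i < q.+1) ('C(q, i.+1))%:R * (-1) ^+ i.+1 * poch x i.+1 / poch u i.+1
   = poch (u - x) q / poch u q.
  rewrite -IH //.
  rewrite [in RHS]big_ord_recl [in LHS]big_ord_recr /= bin_small // mulr0n !mul0r addr0.
  rewrite bin0 expr0 ?poch0 ?poch0' divr1 mulr1; congr (_ + _).
  by rewrite mulr1.
rewrite addrA E1.
have E2 : \sum_(i < q.+1) ('C(q, i))%:R * (-1) ^+ i.+1 * poch x i.+1 / poch u i.+1
   = - (x / u) * (poch (u + 1 - (x + 1)) q / poch (u + 1) q).
  rewrite -IH // mulr_sumr; apply: eq_bigr => i _.
  rewrite !pochS' exprS; field.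
  by rewrite hu0 andbT; apply/prodf_neq0 => j _; exact: hu1.
rewrite E2.
have -> : u + 1 - (x + 1) = u - x by ring.
have E3 : poch (u + 1) q = poch u q * (u + q%:R) / u.
  by rewrite -{1}(mulKf hu0 (poch (u + 1) q)) -pochS' pochS mulrC.
rewrite E3 pochS pochS.
have hq : u + q%:R != 0 by exact: hu.
field.
by rewrite hu0 hq hpu.
Qed.

Lemma psmulX (l k : nat) (G : ps R) (p q : nat) :
  psmul (psX R l k) G p q = if (l <= p)%N && (k <= q)%N then G (p - l)%N (q - k)%N else 0.
Proof.
rewrite /psmul /psX.
transitivity (\sum_(i < p.+1 | i == l :> nat) \sum_(j < q.+1 | j == k :> nat) G (p - i)%N (q - j)%N).
  rewrite [RHS]big_mkcond; apply: eq_bigr => i _ /=.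
  case: (i == l :> nat) => /=.
    rewrite [RHS]big_mkcond; apply: eq_bigr => j _ /=.
    by case: (j == k :> nat); rewrite /= ?mul1r ?mul0r.
  by rewrite big1 // => j _; rewrite mul0r.
rewrite (big_ord1_eq _ (fun i => \sum_(j < q.+1 | j == k :> nat) G (p - i)%N (q - j)%N)).
rewrite (big_ord1_eq _ (fun j => G (p - l)%N (q - j)%N)) !ltnS.
by case: (l <= p)%N; case: (k <= q)%N.
Qed.

Lemma psmulFF (a b c d e u : R) (p q : nat) :
  psmul (Fx a b e) (Fy c d u) p q = Fx a b e p 0 * Fy c d u 0 q.
Proof.
rewrite /psmul big_ord_recr /= big1 ?add0r.
  rewrite big_ord_recl big1 ?addr0 ?subnn ?subn0 // => j _.
  by rewrite /Fx /= mul0r.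
move=> i _; rewrite big1 // => j _.
rewrite /Fy; have -> : (p - i == 0)%N = false.
  by apply/negbTE; rewrite subn_eq0 -ltnNge.
by rewrite mulr0.
Qed.

Lemma poch_splitP x (l p : nat) : (l <= p)%N ->
  poch x p = poch x l * poch (x + l%:R) (p - l)%N.
Proof. by move=> h; rewrite -poch_split subnKC. Qed.

Lemma keyA a (p q k l : nat) : nonint a -> (l <= k)%N -> (k <= q)%N -> (l <= p)%N ->
  poch (a - k%:R + l%:R) ((p - l)%N%:Z - (q - k)%N%:Z)
  = poch a (p%:Z - q%:Z) * poch (1 - a) (k - l)%N / (-1) ^+ (k - l).
Proof.
move=> ha hlk hkq hlp.
set a' := a - k%:R + l%:R.
set s := a + p%:R - q%:R.
set t := a + p%:R - k%:R.
set m := (k - l)%N.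
have ha' : nonint a' by apply: nonint_addn; apply: nonint_subn.
have hs : nonint s by apply: nonint_subn; apply: nonint_addn.
have ht : nonint t by apply: nonint_subn; apply: nonint_addn.
have h1 := poch_sub a' (p - l)%N (q - k)%N ha'.
have e1 : a' + (p - l)%N%:R - (q - k)%N%:R = s by rewrite /a' /s !natrB //; ring.
rewrite e1 in h1.
have h2 := poch_split a' (p - l)%N k.
have e2 : a' + (p - l)%N%:R = t by rewrite /a' /t !natrB //; ring.
rewrite e2 in h2.
have h3 := poch_split a' m p.
have e3 : a' + m%:R = a by rewrite /a' /m !natrB //; ring.
rewrite e3 in h3.
have e3' : (m + p = p - l + k)%N by rewrite /m; lia.
rewrite e3' in h3.
have h4 := poch_neg (1 - a) m.
have e4 : - (1 - a) - m%:R + 1 = a' by rewrite /a' /m !natrB //; ring.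
rewrite e4 in h4.
have h5 := poch_sub a p q ha.
rewrite -/s in h5.
have h6 := poch_split s (q - k)%N k.
have e6 : s + (q - k)%N%:R = t by rewrite /s /t !natrB //; ring.
rewrite e6 subnK // in h6.
have nz1 : poch s (q - k)%N != 0 by exact: poch_neq0.
have nz2 : poch t k != 0 by exact: poch_neq0.
have nz3 : ((-1) ^+ m : R) != 0 by rewrite expf_neq0 // oppr_eq0 oner_eq0.
have E : poch a' ((p - l)%N%:Z - (q - k)%N%:Z) * (poch s (q - k)%N * poch t k)
   = ((-1) ^+ m * poch (1 - a) m * poch a (p%:Z - q%:Z)) * (poch s (q - k)%N * poch t k).
  rewrite mulrA h1 -h2 h3 h4 -mulrA -h6 [X in _ = _ * X]h5; ring.
have E' := mulIf (mulf_neq0 nz1 nz2) E.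
have sg : ((-1) ^+ m)^-1 = (-1) ^+ m :> R by rewrite -exprVn invrN1.
by rewrite E' sg; ring.
Qed.

Lemma factnz (n : nat) : (n`!)%:R != 0 :> R.
Proof. by rewrite pnatr_eq0 -lt0n fact_gt0. Qed.

Lemma nonint1 a : nonint a -> nonint (1 - a).
Proof.
move=> h j.
have -> : 1 - a + j%:~R = - (a + (- (1 + j))%:~R) by rewrite intrN intrD; ring.
by rewrite oppr_eq0; exact: h.
Qed.

Lemma Tterm a b c d e (p q k l : nat) : nonint a -> (forall n : nat, e + n%:R != 0) ->
  (1 <= l)%N -> (l <= k)%N -> (k <= q)%N ->
  Tkl a b c d e k l p q = if (l <= p)%N then
   (poch b p * poch c q * poch d q / poch e p) * poch a (p%:Z - q%:Z) *
   ((-1) ^+ (q - k) * ((k.-1)`!)%:R / (((l.-1)`!)%:R * (l`!)%:R * ((k - l)`!)%:R)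
     / (poch (1 - a) k * ((p - l)`!)%:R * ((q - k)`!)%:R))
  else 0.
Proof.
move=> ha he h1l hlk hkq.
rewrite /Tkl /psscale psmulX hkq andbT.
case: ifP => hlp; last by rewrite mulr0.
rewrite /H2neg /H2 keyA //.
rewrite (poch_splitP b l p hlp) (poch_splitP c k q hkq) (poch_splitP d k q hkq) (poch_splitP e l p hlp).
have hpe : forall n : nat, poch e n != 0.
  by move=> n; apply/prodf_neq0 => i _; exact: he.
have hpe' : poch (e + l%:R) (p - l)%N != 0.
  by apply/prodf_neq0 => i _; rewrite -addrA -natrD; exact: he.
have hu := nonint1 a ha.
have hu1 := poch_neq0 (1 - a) k hu.
have hu2 := poch_neq0 (1 - a) (k - l)%N hu.
have nz3 : ((-1) ^+ (k - l) : R) != 0 by rewrite expf_neq0 // oppr_eq0 oner_eq0.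
set z := ((-1) ^+ (k - l) : R) in nz3 *.
set w := ((-1) ^+ (q - k) : R).
clearbody z w.
field.
by rewrite !factnz hu1 hu2 hpe' hpe nz3.
Qed.

Lemma vand_nat (p k : nat) : (1 <= k)%N ->
  (\sum_(1 <= l < k.+1) 'C(k.-1, l.-1) * 'C(p, l))%N = 'C(p + k.-1, k).
Proof.
move=> hk.
rewrite -binomial.Vandermonde.
rewrite -(big_mkord xpredT (fun j => 'C(p, j) * 'C(k.-1, k - j))%N) [in RHS]big_ltn //= subn0 (@bin_small k.-1 k) ?muln0 ?add0n; last by lia.
apply: eq_big_nat => l /andP [hl1 hl2].
rewrite mulnC; congr (_ * _).
rewrite -bin_sub; last by lia.
by congr 'C(_, _); lia.
Qed.

Lemma rising (p k : nat) : poch (p%:R : R) k = (k`! * 'C(p + k.-1, k))%:R.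
Proof.
elim: k => [|k IH]; first by rewrite poch0' fact0 bin0.
rewrite pochS IH.
case: k IH => [|k] IH.
  rewrite addr0 /= addn0 bin1 bin0 -natrM; congr _%:R.
rewrite -natrD -natrM; congr _%:R.
have := mul_bin_diag (p + k.+1) k.+1; rewrite ?addnS /= => h.
rewrite factS (_ : (k.+2 * (k.+1)`! * 'C((p + k).+1, k.+2) = (k.+1)`! * (k.+2 * 'C((p + k).+1, k.+2)))%N); last by rewrite -mulnA mulnCA.
by rewrite -h -mulnA (mulnC 'C(p + k, k.+1)).
Qed.

Lemma inner (p k : nat) : (1 <= k)%N ->
  \sum_(1 <= l < k.+1) (if (l <= p)%N then ((k.-1)`!)%:R /
      (((l.-1)`!)%:R * (l`!)%:R * ((k - l)`!)%:R) / (((p - l)`!)%:R) else 0)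
  = poch (p%:R) k / ((k`!)%:R * (p`!)%:R) :> R.
Proof.
move=> hk.
transitivity (\sum_(1 <= l < k.+1) ('C(k.-1, l.-1) * 'C(p, l))%:R / (p`!)%:R : R).
  apply: eq_big_nat => l /andP [hl1 hl2].
  case: ifP => hlp; last by rewrite (@bin_small p l) ?muln0 ?mul0r // ltnNge hlp.
  have hlk1 : (l.-1 <= k.-1)%N by lia.
  have hb1 := bin_fact hlk1.
  have e : (k.-1 - l.-1 = k - l)%N by lia.
  rewrite e in hb1.
  have hb2 := bin_fact hlp.
  rewrite -[in LHS]hb1 -[in RHS]hb2.
  rewrite !natrM; field.
  by rewrite !factnz /= !pnatr_eq0 -!lt0n !bin_gt0 hlp; apply/andP; split => //; lia.
rewrite -mulr_suml -natr_sum vand_nat // rising natrM; field.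
by rewrite !factnz.
Qed.

Lemma sgn_sub (k q : nat) : (k <= q)%N -> (-1) ^+ q * (-1) ^+ k = (-1) ^+ (q - k) :> R.
Proof.
move=> h; have hs : (-1) ^+ k * (-1) ^+ k = 1 :> R.
  by rewrite -exprD -signr_odd oddD addbb expr0.
by rewrite -{1}(subnK h) exprD -mulrA hs mulr1.
Qed.

Lemma chu2 (q : nat) u x : (forall i : nat, u + i%:R != 0) ->
  \sum_(k < q.+1) ('C(q, k))%:R * (-1) ^+ (q - k) * poch x k / poch u k
  = (-1) ^+ q * poch (u - x) q / poch u q.
Proof.
move=> hu; rewrite -mulrA -chu // mulr_sumr; apply: eq_bigr => k _.
rewrite -sgn_sub; last by rewrite -ltnS.
set z1 := (-1) ^+ q; set z2 := (-1) ^+ k; clearbody z1 z2; ring.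
Qed.

Lemma main_aux (a b c d e : R)
  (ha : forall n : int, a != n%:~R)
  (he : forall n : nat, e != - n%:R) :
  forall p q : nat,
    psmul (Fx a b e) (Fy c d (1 - a)) p q
    = H2neg a b c d e p q + Tsum a b c d e p q.
Proof.
move=> p q.
have hna : nonint a.
  move=> j; rewrite -(opprK j%:~R) -intrN subr_eq0; exact: ha.
have he' : forall n : nat, e + n%:R != 0.
  by move=> n; rewrite -(opprK n%:R) subr_eq0; exact: he.
have hu := nonint1 a hna.
have hu' : forall i : nat, 1 - a + i%:R != 0.
  by move=> i; have := hu (Posz i).
have hpe : forall n : nat, poch e n != 0.
  by move=> n; apply/prodf_neq0 => i _; exact: he'.
set K := poch b p * poch c q * poch d q / poch e p * poch a (p%:Z - q%:Z).
have E1 : forall k, (1 <= k < q.+1)%N ->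
   \sum_(1 <= l < k.+1) Tkl a b c d e k l p q
   = K * ((-1) ^+ (q - k) / (poch (1 - a) k * ((q - k)`!)%:R))
       * (poch p%:R k / ((k`!)%:R * (p`!)%:R)).
  move=> k /andP [hk1 hkq]; rewrite ltnS in hkq.
  rewrite -inner // mulr_sumr; apply: eq_big_nat => l /andP [hl1 hlk].
  rewrite ltnS in hlk.
  rewrite Tterm //; case: ifP => hlp; last by rewrite mulr0.
  have hk := poch_neq0 (1 - a) k hu.
  set w := (-1) ^+ (q - k); clearbody w.
  rewrite /K; field.
  by rewrite !factnz hk hpe.
rewrite /Tsum (eq_big_nat _ _ E1).
rewrite psmulFF /Fx /Fy /= /H2neg /H2.
rewrite -(poch_sub a p q hna).
have hs : poch (a + p%:R - q%:R) q = (-1) ^+ q * poch (1 - a - p%:R) q.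
  rewrite -poch_neg; congr poch; ring.
rewrite hs.
have hUq := poch_neq0 (1 - a) q hu.
have hc := chu2 q (1 - a) p%:R hu'.
have hc' : (-1) ^+ q * poch (1 - a - p%:R) q = poch (1 - a) q *
   \sum_(k < q.+1) ('C(q, k))%:R * (-1) ^+ (q - k) * poch p%:R k / poch (1 - a) k.
  by rewrite hc; field.
rewrite hc' big_ord_recl /= subn0 bin0 poch0' poch0'.
rewrite big_add1 /= big_mkord.
have E2 : \sum_(i < q) K * ((-1) ^+ (q - i.+1) / (poch (1 - a) i.+1 * ((q - i.+1)`!)%:R)) *
    (poch p%:R i.+1 / ((i.+1`!)%:R * (p`!)%:R))
  = K / ((p`!)%:R * (q`!)%:R) * \sum_(i < q) ('C(q, bump 0 i))%:R * (-1) ^+ (q - bump 0 i)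
       * poch p%:R (bump 0 i) / poch (1 - a) (bump 0 i).
  rewrite mulr_sumr; apply: eq_bigr => i _.
  have eb : bump 0 i = i.+1 by [].
  rewrite eb.
  have hiq : (i.+1 <= q)%N by exact: ltn_ord.
  rewrite -(bin_fact hiq) !natrM.
  have hk := poch_neq0 (1 - a) i.+1 hu.
  have hb : ('C(q, i.+1))%:R != 0 :> R by rewrite pnatr_eq0 -lt0n bin_gt0.
  have hf1 := factnz i.+1.
  set f1 := ((i.+1)`!)%:R in hf1 *.
  set w := (-1) ^+ (q - i.+1); clearbody w K f1.
  field.
  by rewrite hk hb !factnz nat1r pnatr_eq0.
rewrite E2.
set S := \sum_(i < q) _.
rewrite /K; clearbody S.
set w := (-1) ^+ q; clearbody w.
have hf1 := factnz p.
have hf2 := factnz q.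
set fp := (p`!)%:R in hf1 *.
set fq := (q`!)%:R in hf2 *.
clearbody fp fq.
field.
by rewrite hf1 hf2 hpe hUq.
Qed.
End H.

Theorem mainTheorem3 (R : numClosedFieldType) (a b c d e : R)
  (ha : forall n : int, a != n%:~R)
  (he : forall n : nat, e != - n%:R) :
  forall p q : nat,
    psmul (Fx a b e) (Fy c d (1 - a)) p q
    = H2neg a b c d e p q + Tsum a b c d e p q.
Proof. exact: (@main_aux R a b c d e ha he). Qed.
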